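(* Let $N\ge 2$ be an integer. For $k\in\mathbb{Z}$ and arguments $(u,v)$ let $C_k(u,v)\in\mathbb{C}[y,z]^N$ be the column vector whose $i$-th entry ($i=1,\dots,N$, counted from the top) is $p_{k+2(N-i)}(u,v)$. Then (a) $\det\big[C_{-N+2}(y,z),C_{-N+3}(y,z),\dots,C_0(y,z),C_1(y,z)\big]=\phi_N(y,z)$; (b) $\det\big[C_{-N+2}(y/q,z),C_{-N+3}(y,z),\dots,C_1(y,z)\big]=\phi_N(y/q,z)$; (c) $\det\big[C_{-N+2}(y,z/q),C_{-N+3}(y,z),\dots,C_1(y,z)\big]=\phi_N(y,z/q)$; (d) $\det\big[C_{-N+3}(y/q,z),C_{-N+3}(y,z),C_{-N+4}(y,z),\dots,C_1(y,z)\big]=(1-q)\frac{y}{q}\,\phi_N(y/q,z)$; (e) $\det\big[C_{-N+3}(y,z/q),C_{-N+3}(y,z),C_{-N+4}(y,z),\dots,C_1(y,z)\big]=(1-q)\frac{z}{q}\,\phi_N(y,z/q)$; (f) $\det\big[C_{-N+3}(y,z/q),C_{-N+3}(y/q,z),C_{-N+4}(y,z),\dots,C_1(y,z)\big]=\frac{1-q}{q}(z-y)\,\phi_N(y/q,z/q)$. In (b),(c) the $j$-th column for $2\le j\le N$ is $C_{-N+j+1}(y,z)$; in (d),(e) likewise for $2\le j\le N$; in (f) the $j$-th column for $3\le j\le N$ is $C_{-N+j+1}(y,z)$.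
   Context: $q$ is a fixed nonzero complex constant that is not a root of unity; $y,z$ are variables. For $k\in\mathbb{Z}$ the polynomials $p_k(y,z)$ are defined by the generating function $\sum_{n\ge 0}p_n(y,z)t^n=\frac{(-(1-q)t;q)_\infty}{((1-q)yt;q)_\infty((1-q)zt;q)_\infty}$, with $(a;q)_\infty=\prod_{i\ge0}(1-aq^i)$, and $p_k=0$ for $k<0$; equivalently $p_n(y,z)=(1-q)^n\sum_{a+b+c=n}\frac{y^a z^b q^{c(c-1)/2}}{(q;q)_a(q;q)_b(q;q)_c}$ with $(q;q)_m=\prod_{j=1}^m(1-q^j)$. For $N>0$, $\phi_N(y,z)=\det\big(p_{N-2i+j+1}(y,z)\big)_{i,j=1}^N$. *)

(* Defs.v *)
From HB Require Import structures.
From mathcomp Require Import all_boot all_order all_algebra.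
From mathcomp Require Import complex reals.
Set Implicit Arguments. Unset Strict Implicit. Unset Printing Implicit Defensive.
Import Order.TTheory GRing.Theory Num.Theory.
Local Open Scope ring_scope.

Definition qpoch (C : fieldType) (q : C) (m : nat) : C :=
  \prod_(1 <= j < m.+1) (1 - q ^+ j).

Definition pn (C : fieldType) (q : C) (n : nat) (y z : C) : C :=
  (1 - q) ^+ n *
  \sum_(a < n.+1) \sum_(b < (n - a).+1)
     (y ^+ a * z ^+ b * q ^+ 'C(n - a - b, 2)
      / (qpoch q a * qpoch q b * qpoch q (n - a - b))).

Definition pk (C : fieldType) (q : C) (k : int) (y z : C) : C :=
  match k with
  | Posz n => pn q n y z
  | Negz _ => 0
  end.

(* phi_N(y,z) = det (p_{N-2i+j+1})_{i,j=1..N}; with 0-based i,j the index is N-2i+j *)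
Definition phi (C : fieldType) (q : C) (N : nat) (y z : C) : C :=
  \det (\matrix_(i < N, j < N) pk q (N%:Z - 2 * (i : nat)%:Z + (j : nat)%:Z) y z).

(* C_k(u,v): column vector whose i-th entry (1-based) is p_{k+2(N-i)}(u,v);
   with 0-based i the index is k + 2(N-1-i). *)
Definition Ccol (C : fieldType) (q : C) (N : nat) (k : int) (u v : C) : 'cV[C]_N :=
  \col_(i < N) pk q (k + 2 * (N%:Z - 1 - (i : nat)%:Z)) u v.

Definition mxcols (C : fieldType) (N : nat) (cols : 'I_N -> 'cV[C]_N) : 'M[C]_N :=
  \matrix_(i < N, j < N) cols j i 0.

(* the standard column in position j (0-based): C_{-N+(j+1)+1}(y,z) *)
Definition stdcol (C : fieldType) (q : C) (N : nat) (y z : C) (j : 'I_N) : 'cV[C]_N :=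
  Ccol q N ((j : nat)%:Z + 2 - N%:Z) y z.
Arguments stdcol [C] q N y z j.

(* Main.v *)
Require Import Defs.
From HB Require Import structures.
From mathcomp Require Import all_boot all_order all_algebra.
From mathcomp Require Import ring zify.
From mathcomp Require Import complex reals.
Set Implicit Arguments. Unset Strict Implicit. Unset Printing Implicit Defensive.
Import Order.TTheory GRing.Theory Num.Theory.
Local Open Scope ring_scope.

Section PN.
Variable C : fieldType.
Variable q : C.
Hypothesis hq0 : q != 0.
Hypothesis hq : forall n : nat, (0 < n)%N -> q ^+ n != 1.

Definition E n (x : C) := (1 - q) ^+ n * x ^+ n / qpoch q n.
Definition D n := (1 - q) ^+ n * q ^+ 'C(n, 2) / qpoch q n.
Definition G m (z : C) := \sum_(b < m.+1) E b z * D (m - b).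

Lemma qpoch0 : qpoch q 0 = 1.
Proof. by rewrite /qpoch big_geq. Qed.

Lemma qpochS n : qpoch q n.+1 = qpoch q n * (1 - q ^+ n.+1).
Proof. by rewrite /qpoch big_nat_recr. Qed.

Lemma qpoch_neq0 n : qpoch q n != 0.
Proof.
elim: n => [|n IH]; first by rewrite qpoch0 oner_eq0.
rewrite qpochS mulf_neq0 // subr_eq0 eq_sym; exact: hq.
Qed.

Lemma E0 x : E 0 x = 1.
Proof. by rewrite /E !expr0 qpoch0 divr1 mulr1. Qed.

Lemma ES n x : E n.+1 x = E n.+1 (x / q) - (1 - q) * (x / q) * E n (x / q).
Proof.
rewrite /E qpochS !exprS expr_div_n.
set Q := qpoch q n; set A := (1 - q) ^+ n; set X := x ^+ n; set Qn := q ^+ n.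
have h1 := qpoch_neq0 n.
have h2 : 1 - q * Qn != 0 by rewrite subr_eq0 eq_sym -exprS; exact: hq.
have h3 : Qn != 0 by rewrite expf_neq0.
by field; rewrite ?h1 ?h2 ?h3 ?hq0.
Qed.

Lemma pn_conv n y z : pn q n y z = \sum_(a < n.+1) E a y * G (n - a)%N z.
Proof.
rewrite /pn big_distrr /=; apply: eq_bigr => a _.
rewrite /G big_distrr big_distrr /=; apply: eq_bigr => b _.
rewrite /E /D.
have ha : (a <= n)%N by rewrite -ltnS.
have hb : (b <= n - a)%N by rewrite -ltnS.
have -> : (1 - q) ^+ n = (1 - q) ^+ a * (1 - q) ^+ b * (1 - q) ^+ (n - a - b).
  by rewrite -!exprD; congr (_ ^+ _); lia.
rewrite !invfM; ring.
Qed.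


Lemma tri_exchange n (F : nat -> nat -> C) :
  \sum_(a < n.+1) \sum_(b < (n - a).+1) F a b
  = \sum_(b < n.+1) \sum_(a < (n - b).+1) F a b.
Proof.
have W : forall (H : nat -> nat -> C),
   \sum_(a < n.+1) \sum_(b < (n - a).+1) H a b
   = \sum_(a < n.+1) \sum_(b < n.+1) (if (a + b <= n)%N then H a b else 0).
  move=> H; apply: eq_bigr => a _.
  rewrite (big_ord_widen n.+1 (fun b => H (nat_of_ord a) b)); last first.
    by rewrite ltnS leq_subr.
  rewrite big_mkcond /=; apply: eq_bigr => b _.
  have ha := ltn_ord a.
  by have -> : (b < (n - a).+1)%N = (a + b <= n)%N by lia.
rewrite W (W (fun a b => F b a)) exchange_big /=.
apply: eq_bigr => b _; apply: eq_bigr => a _.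
by rewrite addnC.
Qed.

Lemma pn_conv2 n y z : pn q n y z = \sum_(b < n.+1) E b z * G (n - b)%N y.
Proof.
rewrite pn_conv.
have -> : \sum_(a < n.+1) E a y * G (n - a)%N z
   = \sum_(a < n.+1) \sum_(b < (n - a).+1) E a y * E b z * D (n - a - b).
  apply: eq_bigr => a _; rewrite /G big_distrr /=; apply: eq_bigr => b _.
  by rewrite mulrA.
rewrite (@tri_exchange n (fun a b => E a y * E b z * D (n - a - b))); apply: eq_bigr => b _; rewrite /G big_distrr /=.
apply: eq_bigr => a _.
by rewrite [(n - b - a)%N]subnAC mulrA [E b z * _]mulrC.
Qed.

Lemma conv_shift (H : nat -> C) n x :
  \sum_(a < n.+2) E a x * H (n.+1 - a)%N
  = \sum_(a < n.+2) E a (x / q) * H (n.+1 - a)%N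
    - (1 - q) * (x / q) * \sum_(a < n.+1) E a (x / q) * H (n - a)%N.
Proof.
rewrite big_ord_recl [in RHS]big_ord_recl !E0 /=.
under eq_bigr => a _ do rewrite /bump /= subSS ES.
rewrite mulr_sumr -addrA; congr (_ + _).
rewrite -sumrB; apply: eq_bigr => a _; rewrite /bump /= subSS; ring.
Qed.

Definition cc (x : C) := (1 - q) * (x / q).

Lemma pk_rel_y (k : int) u v :
  pk q k u v = pk q k (u / q) v - cc u * pk q (k - 1) (u / q) v.
Proof.
case: k => [[|n]|m].
- by rewrite /= !pn_conv !big_ord1 !E0 mulr0 subr0.
- have -> : (Posz n.+1 - 1 = Posz n)%R by rewrite -addn1 PoszD addrK.
  by rewrite /= !pn_conv (conv_shift (fun m => G m v)).
- have -> : (Negz m - 1 = Negz m.+1)%R by rewrite !NegzE; lia.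
  by rewrite /= mulr0 subr0.
Qed.

Lemma pk_rel_z (k : int) u v :
  pk q k u v = pk q k u (v / q) - cc v * pk q (k - 1) u (v / q).
Proof.
case: k => [[|n]|m].
- by rewrite /= !pn_conv2 !big_ord1 !E0 mulr0 subr0.
- have -> : (Posz n.+1 - 1 = Posz n)%R by rewrite -addn1 PoszD addrK.
  by rewrite /= !pn_conv2 (conv_shift (fun m => G m u)).
- have -> : (Negz m - 1 = Negz m.+1)%R by rewrite !NegzE; lia.
  by rewrite /= mulr0 subr0.
Qed.

End PN.
Section MX.
Variable C : fieldType.
Variable n : nat.
Notation N := n.+2.

Definition Sh : 'M[C]_N := \matrix_(k, j) ((k : nat).+1 == j)%:R.
Definition U (a : C) : 'M[C]_N := 1%:M - a *: Sh.
Definition Tm (c d : C) (j0 k0 : 'I_N) : 'M[C]_N :=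
  \matrix_(k, j) if j == j0 then (if k == j0 then c else if k == k0 then d else 0)
                 else (k == j)%:R.

Lemma sum_delta (F : 'I_N -> C) j : \sum_k F k * (k == j)%:R = F j.
Proof.
rewrite (bigD1 j) //= eqxx mulr1 big1 ?addr0 // => k /negbTE ->; by rewrite mulr0.
Qed.

Lemma mulmx_U (X : 'M[C]_N) a i j :
  (X *m U a) i j = if (j : nat) is j'.+1 then X i j - a * X i (inord j') else X i j.
Proof.
rewrite /U mulmxBr mulmx1 -scalemxAr !mxE.
case: j => [[|j'] hj] /=.
  by rewrite big1 ?mulr0 ?subr0 // => k _; rewrite mxE /= mulr0.
congr (_ - _ * _).
rewrite (bigD1 (inord j')) //= mxE inordK ?eqxx ?mulr1; last by lia.
rewrite big1 ?addr0 // => k hk; rewrite mxE eqSS.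
have -> : ((k : nat) == j') = false.
  apply/negbTE; apply: contra hk => /eqP hk; apply/eqP/val_inj.
  by rewrite /= inordK //; lia.
by rewrite mulr0.
Qed.

Lemma mulmx_T (X : 'M[C]_N) c d j0 k0 i j : k0 != j0 ->
  (X *m Tm c d j0 k0) i j = if j == j0 then X i j0 * c + X i k0 * d else X i j.
Proof.
move=> hne; rewrite !mxE.
case: (eqVneq j j0) => [->|hj].
  rewrite (bigD1 j0) //= mxE !eqxx (bigD1 k0) /=; last by rewrite hne.
  rewrite mxE eqxx (negbTE hne) eqxx big1 ?addr0 // => k /andP [h1 h2].
  by rewrite mxE eqxx (negbTE h1) (negbTE h2) mulr0.
rewrite -[RHS](sum_delta (fun k => X i k)); apply: eq_bigr => k _.
by rewrite mxE (negbTE hj).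
Qed.

Lemma det_U a : \det (U a) = 1.
Proof.
rewrite -det_tr det_trig.
  rewrite big1 // => i _; rewrite !mxE eqxx.
  have -> : ((i : nat).+1 == i) = false by lia.
  by rewrite mulr0 subr0.
apply/is_trig_mxP => i j hij; rewrite !mxE.
have -> : (j == i) = false by apply/negbTE; rewrite neq_ltn hij orbT.
have -> : ((j : nat).+1 == i) = false by apply/negbTE; lia.
by rewrite mulr0 subr0.
Qed.

Lemma det_T c d j0 k0 : k0 != j0 -> \det (Tm c d j0 k0) = c.
Proof.
move=> hne.
have diag : \prod_(i < N) Tm c d j0 k0 i i = c.
  rewrite (bigD1 j0) //= mxE !eqxx big1 ?mulr1 // => i hi.
  by rewrite mxE (negbTE hi) eqxx.
case: (ltngtP k0 j0) => h; last by move: hne; rewrite (val_inj h) eqxx.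
- rewrite -det_tr det_trig; first by rewrite -[RHS]diag; apply: eq_bigr => i _; rewrite mxE.
  apply/is_trig_mxP => i j hij; rewrite !mxE.
  case: (eqVneq i j0) => [e|hi]; last first.
    by have -> : (j == i) = false by apply/negbTE; rewrite neq_ltn hij orbT.
  subst i; have -> : (j == j0) = false by apply/negbTE; rewrite neq_ltn hij orbT.
  by have -> : (j == k0) = false by apply/negbTE; rewrite neq_ltn (ltn_trans h hij) orbT.
- rewrite det_trig; first exact: diag.
  apply/is_trig_mxP => i j hij; rewrite !mxE.
  case: (eqVneq j j0) => [e|hj]; last first.
    by have -> : (i == j) = false by apply/negbTE; rewrite neq_ltn hij.
  subst j; have -> : (i == j0) = false by apply/negbTE; rewrite neq_ltn hij.
  by have -> : (i == k0) = false by apply/negbTE; rewrite neq_ltn (ltn_trans hij h).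
Qed.

Definition Mx (g : int -> C) : 'M[C]_N :=
  \matrix_(i < N, j < N) g (N%:Z - 2 * (i : nat)%:Z + (j : nat)%:Z).

Lemma stepU (g f : int -> C) a (hfg : forall k, f k = g k - a * g (k - 1)) :
  Mx g *m U a = \matrix_(i, j) if (j : nat) == 0%N then g (N%:Z - 2 * (i : nat)%:Z)
                               else f (N%:Z - 2 * (i : nat)%:Z + (j : nat)%:Z).
Proof.
apply/matrixP => i j; rewrite mulmx_U !mxE.
case: j => [[|j'] hj] /=; first by rewrite addr0.
rewrite hfg !mxE inordK; last by lia.
by congr (_ - _ * g _); lia.
Qed.

End MX.

Theorem lemma1 (R : realType) (q : R[i]) (hq0 : q != 0)
    (hq : forall n : nat, (0 < n)%N -> q ^+ n != 1)
    (N : nat) (hN : (2 <= N)%N) (y z : R[i]) :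
  (
   (* (a) *)
   \det (mxcols (stdcol q N y z)) = phi q N y z) /\ (
   (* (b) *)
   \det (mxcols (fun j : 'I_N =>
      if (j : nat) == 0%N then Ccol q N (2 - N%:Z) (y / q) z else stdcol q N y z j))
     = phi q N (y / q) z) /\ (
   (* (c) *)
   \det (mxcols (fun j : 'I_N =>
      if (j : nat) == 0%N then Ccol q N (2 - N%:Z) y (z / q) else stdcol q N y z j))
     = phi q N y (z / q)) /\ (
   (* (d) *)
   \det (mxcols (fun j : 'I_N =>
      if (j : nat) == 0%N then Ccol q N (3 - N%:Z) (y / q) z else stdcol q N y z j))
     = (1 - q) * (y / q) * phi q N (y / q) z) /\ (
   (* (e) *)
   \det (mxcols (fun j : 'I_N =>
      if (j : nat) == 0%N then Ccol q N (3 - N%:Z) y (z / q) else stdcol q N y z j))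
     = (1 - q) * (z / q) * phi q N y (z / q)) /\ (
   (* (f) *)
   \det (mxcols (fun j : 'I_N =>
      if (j : nat) == 0%N then Ccol q N (3 - N%:Z) y (z / q)
      else if (j : nat) == 1%N then Ccol q N (3 - N%:Z) (y / q) z
      else stdcol q N y z j))
     = (1 - q) / q * (z - y) * phi q N (y / q) (z / q)).
Proof.
case: N hN => [|[|n]] // _.
have Ry := pk_rel_y hq0 hq.
have Rz := pk_rel_z hq0 hq.
set P := fun u v (k : int) => pk q k u v.
have phiE : forall u v, phi q n.+2 u v = \det (Mx n (P u v)) by [].
have i01 : (lift ord0 ord0 : 'I_n.+2) != ord0 by [].
have Eb : forall u v, mxcols (fun j : 'I_n.+2 =>
      if (j : nat) == 0%N then Ccol q n.+2 (2 - n.+2%:Z) u v else stdcol q n.+2 y z j)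
   = \matrix_(i, j) if (j : nat) == 0%N then P u v (n.+2%:Z - 2 * (i : nat)%:Z)
                               else P y z (n.+2%:Z - 2 * (i : nat)%:Z + (j : nat)%:Z).
  move=> u v; apply/matrixP => i j; rewrite !mxE.
  by case: ifP => _; rewrite !mxE /P; congr pk; lia.
split.
  rewrite phiE; congr (\det _); apply/matrixP => i j; rewrite !mxE /P.
  by congr pk; lia.
split.
  rewrite Eb -(@stepU _ n (P (y / q) z) (P y z) (cc q y)); last by move=> k; apply: Ry.
  by rewrite det_mulmx det_U mulr1.
split.
  rewrite Eb -(@stepU _ n (P y (z / q)) (P y z) (cc q z)); last by move=> k; apply: Rz.
  by rewrite det_mulmx det_U mulr1.
split.
  have -> : mxcols (fun j : 'I_n.+2 =>
      if (j : nat) == 0%N then Ccol q n.+2 (3 - n.+2%:Z) (y / q) z else stdcol q n.+2 y z j)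
    = (Mx n (P (y / q) z) *m U n (cc q y)) *m Tm (cc q y) 1 ord0 (lift ord0 ord0).
    rewrite (@stepU _ n (P (y / q) z) (P y z) (cc q y)); last by move=> k; apply: Ry.
    apply/matrixP => i j; rewrite mulmx_T // !mxE.
    case: (eqVneq j ord0) => [->|hj] /=.
      rewrite !mxE /= /P mulr1.
      set B := (n.+2%:Z - 2 * (i : nat)%:Z).
      rewrite [pk q (_ + _) y z]Ry.
      have -> : B + (bump 0 0)%:Z - 1 = B by rewrite /bump /=; lia.
      have -> : 3 - n.+2%:Z + 2 * (n.+2%:Z - 1 - (i : nat)%:Z) = B + (bump 0 0)%:Z.
        by rewrite /B /bump /=; lia.
      ring.
    have -> : ((j : nat) == 0%N) = false by apply/negbTE; move: hj; apply: contra => /eqP h; apply/eqP/val_inj.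
    by rewrite !mxE /P; congr pk; lia.
  by rewrite !det_mulmx det_U det_T // mulr1 mulrC phiE.
split.
  have -> : mxcols (fun j : 'I_n.+2 =>
      if (j : nat) == 0%N then Ccol q n.+2 (3 - n.+2%:Z) y (z / q) else stdcol q n.+2 y z j)
    = (Mx n (P y (z / q)) *m U n (cc q z)) *m Tm (cc q z) 1 ord0 (lift ord0 ord0).
    rewrite (@stepU _ n (P y (z / q)) (P y z) (cc q z)); last by move=> k; apply: Rz.
    apply/matrixP => i j; rewrite mulmx_T // !mxE.
    case: (eqVneq j ord0) => [->|hj] /=.
      rewrite !mxE /= /P mulr1.
      set B := (n.+2%:Z - 2 * (i : nat)%:Z).
      rewrite [pk q (_ + _) y z]Rz.
      have -> : B + (bump 0 0)%:Z - 1 = B by rewrite /bump /=; lia.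
      have -> : 3 - n.+2%:Z + 2 * (n.+2%:Z - 1 - (i : nat)%:Z) = B + (bump 0 0)%:Z.
        by rewrite /B /bump /=; lia.
      ring.
    have -> : ((j : nat) == 0%N) = false by apply/negbTE; move: hj; apply: contra => /eqP h; apply/eqP/val_inj.
    by rewrite !mxE /P; congr pk; lia.
  by rewrite !det_mulmx det_U det_T // mulr1 mulrC phiE.
  set i1 : 'I_n.+2 := lift ord0 ord0.
  have i10 : (ord0 : 'I_n.+2) != i1 by [].
  have -> : mxcols (fun j : 'I_n.+2 =>
      if (j : nat) == 0%N then Ccol q n.+2 (3 - n.+2%:Z) y (z / q)
      else if (j : nat) == 1%N then Ccol q n.+2 (3 - n.+2%:Z) (y / q) z
      else stdcol q n.+2 y z j)
    = (((Mx n (P (y / q) (z / q)) *m U n (cc q z)) *m U n (cc q y))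
        *m Tm 1 (cc q y) i1 ord0) *m Tm (cc q z - cc q y) 1 ord0 i1.
    rewrite (@stepU _ n (P (y / q) (z / q)) (P (y / q) z) (cc q z)); last by move=> k; apply: Rz.
    apply/matrixP => i j; rewrite !mulmx_T // !mulmx_U !mxE.
    case: j => [[|[|j']] hj]; rewrite -?val_eqE /= !mxE /P ?inordK //=; try lia.
    - set B := (n.+2%:Z - 2 * (i : nat)%:Z).
      rewrite [pk q (_ + _) (y / q) z]Rz.
      have -> : B + (bump 0 0)%:Z - 1 = B by rewrite /bump /=; lia.
      have -> : 3 - n.+2%:Z + 2 * (n.+2%:Z - 1 - (i : nat)%:Z) = B + (bump 0 0)%:Z.
        by rewrite /B /bump /=; lia.
      rewrite [pk q (_ + _) y (z / q)]Ry.
      have -> : B + (bump 0 0)%:Z - 1 = B by rewrite /bump /=; lia.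
      ring.
    - set B := (n.+2%:Z - 2 * (i : nat)%:Z).
      have -> : 3 - n.+2%:Z + 2 * (n.+2%:Z - 1 - (i : nat)%:Z) = B + (bump 0 0)%:Z.
        by rewrite /B /bump /=; lia.
      ring.
    - set B := (n.+2%:Z - 2 * (i : nat)%:Z).
      rewrite [pk q (_ + _) y z]Ry.
      have -> : (j'.+2%:Z + 2 - n.+2%:Z + 2 * (n.+2%:Z - 1 - (i : nat)%:Z)) = B + j'.+2%:Z.
        by rewrite /B; lia.
      by congr (_ - _ * pk q _ _ _); lia.
  rewrite !det_mulmx !det_U !det_T // !mulr1 phiE /cc.
  ring.
Qed.
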